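(* Let $N_1,N_2,N_w,N_b,N$ and $T$ be as in the context. For a vector $c=(c_0,\dots,c_{N_w})\in\mathbb{R}^{N_w+1}$ define $b=(b_0,\dots,b_{N_w})$ by the polynomial identity $$\sum_{i=0}^{N_w}c_i\,x^iy^{N_1-i}z^{N_w-i}=\sum_{i=0}^{N_w}b_i\,(x-yz)^i\,y^{N_1-i}z^{N_w-i},$$ equivalently $b_j=\sum_{i=j}^{N_w}\binom{i}{j}c_i$ (an invertible linear map, with inverse $c_i=\sum_{j=i}^{N_w}(-1)^{j-i}\binom{j}{i}b_j$). Then $Tc=\lambda c$ holds if and only if, for all $i=0,\dots,N_w$ (with $b_{-1}:=0$), $$N_1N_2(\lambda-1)\,b_i=(N_1-i+1)(N_w-i+1)\,b_{i-1}-i\,(N_w-i+N_b+1)\,b_i .$$ In particular, $T$ is similar to a lower triangular matrix with diagonal entries $1-\frac{i(N_w+N_b+1-i)}{N_1N_2}$, $i=0,\dots,N_w$.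
   Context: Integers $N_1,N_2\ge1$, $N_w,N_b\ge0$ with $N_w+N_b=N_1+N_2=:N$, $N_w\le N_1$, $N_w\le N_2$. States $i\in\{0,\dots,N_w\}$ (number of white balls in urn 1). $p_i=\frac{(N_1-i)(N_w-i)}{N_1N_2}$, $q_i=\frac{i(N_b-N_1+i)}{N_1N_2}$, $r_i=1-p_i-q_i$. $T$ is the $(N_w+1)\times(N_w+1)$ matrix with $T_{i+1,i}=p_i$, $T_{i-1,i}=q_i$, $T_{ii}=r_i$, other entries $0$ ($T_{ij}$ is the probability of moving from state $j$ to state $i$; columns sum to 1). *)

(* Defs.v *)
From HB Require Import structures.
From mathcomp Require Import all_boot all_order all_algebra.
Set Implicit Arguments. Unset Strict Implicit. Unset Printing Implicit Defensive.
Import Order.TTheory GRing.Theory Num.Theory.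
Local Open Scope ring_scope.

Section Urn.
Variable R : realFieldType.
Variables N1 N2 Nw Nb : nat.

Definition p_ (i : nat) : R :=
  ((N1%:R - i%:R) * (Nw%:R - i%:R)) / (N1%:R * N2%:R).
Definition q_ (i : nat) : R :=
  (i%:R * (Nb%:R - N1%:R + i%:R)) / (N1%:R * N2%:R).
Definition r_ (i : nat) : R := 1 - p_ i - q_ i.

(* T i j = probability of moving from state j to state i (columns sum to 1). *)
Definition urnT : 'M[R]_(Nw.+1) :=
  \matrix_(i, j) (if (i : nat) == (j : nat).+1 then p_ j
                  else if (i : nat).+1 == j then q_ j
                  else if (i : nat) == j then r_ j else 0).

(* b_j = sum_{i=j}^{Nw} C(i,j) c_i  (binomial vanishes for i < j). *)
Definition bcoef (c : 'cV[R]_(Nw.+1)) (j : nat) : R :=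
  \sum_(i < Nw.+1) ('C(i, j))%:R * c i 0.
End Urn.

(* Main.v *)
Require Import Defs.
From HB Require Import structures.
From mathcomp Require Import all_boot all_order all_algebra.
From mathcomp Require Import ring lra zify.
Import Order.TTheory GRing.Theory Num.Theory.
Local Open Scope ring_scope.

Section S.
Variable R : realFieldType.
Variables N1 N2 Nw Nb : nat.
Hypothesis hN1 : (1 <= N1)%N.
Hypothesis hN2 : (1 <= N2)%N.

Lemma sum_ind (n m : nat) (F : nat -> R) :
  \sum_(i < n) (((i:nat) == m)%:R * F i) = if (m < n)%N then F m else 0.
Proof.
case: ifP => h.
  rewrite (bigD1 (Ordinal h)) //= eqxx mul1r big1 ?addr0 // => i hi.
  have -> : ((i:nat) == m) = false.
    by apply/negbTE; apply: contra hi => /eqP e; apply/eqP/val_inj.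
  by rewrite mul0r.
rewrite big1 // => i _.
have -> : ((i:nat) == m) = false by apply/negbTE/eqP => e; move: (ltn_ord i); rewrite e h.
by rewrite mul0r.
Qed.

Lemma sum_indS (n m : nat) (F : nat -> R) :
  \sum_(i < n) (((i:nat).+1 == m)%:R * F i) =
  if m is m'.+1 then (if (m' < n)%N then F m' else 0) else 0.
Proof.
case: m => [|m']; first by rewrite big1 // => i _; rewrite mul0r.
under eq_bigr do rewrite eqSS.
exact: sum_ind.
Qed.

Lemma if3 (i k : nat) (p q r : R) :
  (if i == k.+1 then p else if i.+1 == k then q else if i == k then r else 0) =
  (i == k.+1)%:R * p + (i.+1 == k)%:R * q + (i == k)%:R * r.
Proof.
case: (i =P k.+1) => h1; case: (i.+1 =P k) => h2; case: (i =P k) => h3 //=;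
  try lia; rewrite ?mul1r ?mul0r ?addr0 ?add0r //.
Qed.

Lemma if2 (i j : nat) (x y : R) :
  (if i == j then x else if j == i.+1 then y else 0) =
  (i == j)%:R * x + (i.+1 == j)%:R * y.
Proof.
case: (i =P j) => h1; case: (j =P i.+1) => h2; case: (i.+1 =P j) => h3 //=;
  try lia; rewrite ?mul1r ?mul0r ?addr0 ?add0r //.
Qed.

Let D : R := N1%:R * N2%:R.
Lemma hDn : D != 0.
Proof. by rewrite /D mulf_neq0 // pnatr_eq0 -lt0n. Qed.
Lemma hN1n : (N1%:R : R) != 0. Proof. by rewrite pnatr_eq0 -lt0n. Qed.
Lemma hN2n : (N2%:R : R) != 0. Proof. by rewrite pnatr_eq0 -lt0n. Qed.

Definition dd (i : nat) : R :=
  1 - i%:R * (Nw%:R + Nb%:R + 1 - i%:R) / (N1%:R * N2%:R).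
Definition mm (i : nat) : R :=
  (N1%:R - i%:R + 1) * (Nw%:R - i%:R + 1) / (N1%:R * N2%:R).

Lemma key (k j : nat) :
  ('C(k.+1, j))%:R * p_ R N1 N2 Nw k + ('C(k.-1, j))%:R * q_ R N1 N2 Nb k
  + ('C(k, j))%:R * r_ R N1 N2 Nw Nb k
  = dd j * ('C(k, j))%:R + (if j is j'.+1 then mm j * ('C(k, j'))%:R else 0).
Proof.
have h1 := hN1n; have h2 := hN2n.
case: j => [|j'].
  rewrite !bin0 /r_ /dd; field; by rewrite h1 h2.
have e1 : (j'.+1)%:R * ('C(k, j'.+1))%:R = (k%:R - j'%:R) * ('C(k, j'))%:R :> R.
  case: (leqP j' k) => h.
    by rewrite -natrB // -!natrM mul_bin_left.
  by rewrite !bin_small ?mulr0 // ltnW.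
have e2 : k%:R * ('C(k.-1, j'.+1))%:R = (k%:R - (j'.+1)%:R) * ('C(k, j'.+1))%:R :> R.
  case: (leqP j'.+1 k) => h.
    by rewrite -natrB // -!natrM mul_bin_down.
  rewrite !(@bin_small _ j'.+1) ?mulr0 //; lia.
rewrite binS natrD /p_ /q_ /r_ /dd /mm.
set X := ('C(k, j'.+1))%:R : R.
set Y := ('C(k, j'))%:R : R.
set Z := ('C(k.-1, j'.+1))%:R : R.
move: e1 e2; rewrite -/X -/Y -/Z => e1 e2.
match goal with |- ?A = ?B =>
  have E : A - B = (Nb%:R - N1%:R + k%:R) / (N1%:R * N2%:R) * (k%:R * Z - (k%:R - (j'.+1)%:R) * X)
     + (Nw%:R + N1%:R + 1 - (j'.+1)%:R - k%:R) / (N1%:R * N2%:R) * ((j'.+1)%:R * X - (k%:R - j'%:R) * Y)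
end.
  rewrite /p_ /q_; field; by rewrite h1 h2.
by apply/eqP; rewrite -subr_eq0 E e1 e2 !subrr !mulr0 addr0.
Qed.

Definition Bm : 'M[R]_(Nw.+1) := \matrix_(j, i) ('C(i, j))%:R.
Definition Lm : 'M[R]_(Nw.+1) :=
  \matrix_(i, j) (if (j : nat) == i then dd i
                  else if (i : nat) == (j : nat).+1 then mm i else 0).

Lemma Lm_ind (i j : 'I_Nw.+1) :
  Lm i j = ((j:nat) == i)%:R * dd i + ((j:nat).+1 == i)%:R * mm i.
Proof. by rewrite mxE if2. Qed.

Lemma BT : Bm *m urnT R N1 N2 Nw Nb = Lm *m Bm.
Proof.
apply/matrixP => j k; rewrite !mxE.
rewrite (eq_bigr (fun i : 'I_Nw.+1 =>
   ((i:nat) == (k:nat).+1)%:R * (('C(i, j))%:R * p_ R N1 N2 Nw k)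
 + ((i:nat).+1 == k)%:R * (('C(i, j))%:R * q_ R N1 N2 Nb k)
 + ((i:nat) == k)%:R * (('C(i, j))%:R * r_ R N1 N2 Nw Nb k))); last first.
  by move=> i _; rewrite !mxE if3; ring.
rewrite [RHS](eq_bigr (fun i : 'I_Nw.+1 =>
   ((i:nat) == j)%:R * (dd j * ('C(k, i))%:R)
 + ((i:nat).+1 == j)%:R * (mm j * ('C(k, i))%:R))); last first.
  by move=> i _; rewrite Lm_ind !mxE; ring.
rewrite !big_split /=.
rewrite (sum_ind _ _ (fun i => ('C(i, j))%:R * p_ R N1 N2 Nw k)).
rewrite (sum_indS _ _ (fun i => ('C(i, j))%:R * q_ R N1 N2 Nb k)).
rewrite (sum_ind _ _ (fun i => ('C(i, j))%:R * r_ R N1 N2 Nw Nb k)).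
rewrite (sum_ind _ _ (fun i => dd j * ('C(k, i))%:R)).
rewrite (sum_indS _ _ (fun i => mm j * ('C(k, i))%:R)).
rewrite !ltn_ord.
have -> : (if (j:nat) is m'.+1 then (if (m' < Nw.+1)%N then mm j * ('C(k, m'))%:R else 0) else 0)
          = (if (j:nat) is m'.+1 then mm j * ('C(k, m'))%:R else 0).
  by case: j => [[|j'] hj] //=; rewrite (ltnW hj).
rewrite -key.
have -> : (if (k.+1 < Nw.+1)%N then ('C(k.+1, j))%:R * p_ R N1 N2 Nw k else 0)
          = ('C(k.+1, j))%:R * p_ R N1 N2 Nw k.
  case: ifP => // h.
  have -> : (k : nat) = Nw by move: (ltn_ord k) h; lia.
  by rewrite /p_ subrr !mulr0 mul0r mulr0.
have -> : (if (k:nat) is m'.+1 then (if (m' < Nw.+1)%N then ('C(m', j))%:R * q_ R N1 N2 Nb k else 0) else 0)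
          = ('C((k:nat).-1, j))%:R * q_ R N1 N2 Nb k.
  case: k => [[|k'] hk] /=; first by rewrite /q_ !mul0r mulr0.
  by rewrite (ltnW hk).
by [].
Qed.

Lemma Bm_unit : Bm \in unitmx.
Proof.
rewrite unitmxE -det_tr det_trig.
  by rewrite big1 ?unitr1 // => i _; rewrite !mxE binn.
apply/is_trig_mxP => i j hij; rewrite !mxE bin_small //.
Qed.

Lemma bcoefE (c : 'cV[R]_(Nw.+1)) (j : 'I_Nw.+1) : (Bm *m c) j 0 = bcoef c j.
Proof. by rewrite mxE /bcoef; apply: eq_bigr => i _; rewrite mxE. Qed.

Lemma scE (c : 'cV[R]_(Nw.+1)) lam (i : 'I_Nw.+1) (j : 'I_1) :
  (lam *: (Bm *m c)) i j = lam * bcoef c i.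
Proof. by rewrite ord1 -bcoefE [LHS]mxE. Qed.

Lemma rowL (c : 'cV[R]_(Nw.+1)) (i : 'I_Nw.+1) :
  (Lm *m (Bm *m c)) i 0 = dd i * bcoef c i
     + mm i * (if (i : nat) is k.+1 then bcoef c k else 0).
Proof.
rewrite mxE (eq_bigr (fun j : 'I_Nw.+1 =>
   ((j:nat) == i)%:R * (dd i * bcoef c j)
 + ((j:nat).+1 == i)%:R * (mm i * bcoef c j))); last first.
  by move=> j _; rewrite Lm_ind bcoefE; ring.
rewrite big_split /= (sum_ind _ _ (fun j => dd i * bcoef c j))
  (sum_indS _ _ (fun j => mm i * bcoef c j)) ltn_ord.
case: i => [[|i'] hi] /=; first by rewrite !mulr0.
by rewrite (ltnW hi).
Qed.

Lemma cond_equiv (i : nat) (lam b P : R) :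
  (dd i * b + mm i * P = lam * b) <->
  (N1%:R * N2%:R * (lam - 1) * b =
     (N1%:R - i%:R + 1) * (Nw%:R - i%:R + 1) * P
     - i%:R * (Nw%:R - i%:R + Nb%:R + 1) * b).
Proof.
have h1 := hN1n; have h2 := hN2n.
have E : N1%:R * N2%:R * (lam - 1) * b -
     ((N1%:R - i%:R + 1) * (Nw%:R - i%:R + 1) * P
     - i%:R * (Nw%:R - i%:R + Nb%:R + 1) * b)
   = N1%:R * N2%:R * (lam * b - (dd i * b + mm i * P)).
  rewrite /dd /mm; field; by rewrite h1 h2.
split => h.
  by apply/eqP; rewrite -subr_eq0 E h subrr mulr0.
apply/eqP; rewrite eq_sym -subr_eq0.
move/eqP: h; rewrite -subr_eq0 E mulf_eq0 (negbTE hDn) //.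
Qed.
End S.

Theorem mainTheorem2 (R : realFieldType) (N1 N2 Nw Nb : nat)
  (hN1 : (1 <= N1)%N) (hN2 : (1 <= N2)%N) (hN : (Nw + Nb = N1 + N2)%N)
  (hw1 : (Nw <= N1)%N) (hw2 : (Nw <= N2)%N) :
  (forall (c : 'cV[R]_(Nw.+1)) (lam : R),
     urnT R N1 N2 Nw Nb *m c = lam *: c <->
     (forall i : 'I_(Nw.+1),
        N1%:R * N2%:R * (lam - 1) * bcoef c i =
          (N1%:R - (i : nat)%:R + 1) * (Nw%:R - (i : nat)%:R + 1)
            * (if (i : nat) is k.+1 then bcoef c k else 0)
          - (i : nat)%:R * (Nw%:R - (i : nat)%:R + Nb%:R + 1) * bcoef c i))
  /\
  (exists (P L : 'M[R]_(Nw.+1)),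
     [/\ P \in unitmx,
         urnT R N1 N2 Nw Nb = P *m L *m invmx P,
         (forall i j : 'I_(Nw.+1), (i < j)%N -> L i j = 0) &
         (forall i : 'I_(Nw.+1),
            L i i = 1 - (i : nat)%:R * (Nw%:R + Nb%:R + 1 - (i : nat)%:R)
                        / (N1%:R * N2%:R))]).
Proof.
have hB := Bm_unit R Nw.
have hBT := @BT R N1 N2 Nw Nb hN1 hN2.
set T := urnT R N1 N2 Nw Nb in hBT *.
split.
  move=> c lam.
  have E : T *m c = lam *: c <-> Lm R N1 N2 Nw Nb *m (Bm R Nw *m c) = lam *: (Bm R Nw *m c).
    split => h.
      by rewrite mulmxA -hBT -mulmxA h scalemxAr.
    have e : Bm R Nw *m (T *m c) = Bm R Nw *m (lam *: c).
      by rewrite mulmxA hBT -mulmxA h scalemxAr.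
    by rewrite -(mulKmx hB (T *m c)) e mulKmx.
  rewrite E; split.
    move=> /matrixP h i.
    apply/(@cond_equiv R N1 N2 Nw Nb hN1 hN2).
    rewrite -(@rowL R N1 N2 Nw Nb hN1 hN2) h; exact: scE.
  move=> h; apply/matrixP => i j; rewrite ord1 (@rowL R N1 N2 Nw Nb hN1 hN2).
  transitivity (lam * bcoef c i); last by symmetry; apply: scE.
  exact/(@cond_equiv R N1 N2 Nw Nb hN1 hN2)/h.
exists (invmx (Bm R Nw)), (Lm R N1 N2 Nw Nb); split.
- by rewrite unitmx_inv.
- by rewrite invmxK -mulmxA -hBT mulKmx.
- by move=> i j hij; rewrite mxE ifF ?ifF //; apply/negbTE/eqP => e;
    move: hij; rewrite e; lia.
- by move=> i; rewrite mxE eqxx.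
Qed.
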